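(* Let $T$ and $S$ be binary search trees on the same finite set of keys, with nodes identified via their keys, and let $v$ be a node. Splaying $v$ in $S$ (while $T$ stays fixed) has amortized cost at most $4+6\,d_T(v)$, where $d_T(v)$ is the depth of $v$ in $T$.
   Context: Splaying a node $x$ in $S$ repeatedly applies the following steps until $x$ is the root, where $y$ is the parent and $z$ the grandparent of $x$: Zig (if $y$ is the root, rotate $x$ over $y$); ZigZig (if $x$ and $y$ are both left children or both right children, rotate $y$ over $z$ and then $x$ over $y$); ZigZag (otherwise, rotate $x$ over $y$ and then $x$ over $z$). The actual cost of a Zig step is $1$ and of a ZigZig or ZigZag step is $2$ (so the actual cost of splaying equals the depth of $x$ in $S$). Potential: for every node $u$, $w_T(u)=1/4^{d_T(u)}$ where $d_T(u)$ is the depth of $u$ in $T$ (root has depth $0$), $w(u)=w_T(u)$; $s_T(u)$ (resp. $s(u)$) is the sum of weights in the subtree of $u$ in $T$ (resp. $S$), including $u$; $r_T(u)=\log_2 s_T(u)$, $r(u)=\log_2 s(u)$; $P(T)=\sum_u r_T(u)$, $P(S)=\sum_u r(u)$ and $\Phi=P(S)-P(T)$. The amortized cost of an operation is its actual cost plus $\Phi_{\text{after}}-\Phi_{\text{before}}$. *)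

(* Defs.v *)
From Stdlib Require Import Reals Lra Lia Arith List.
Import ListNotations.
Open Scope R_scope.

Inductive tree : Type :=
| Leaf : tree
| Node : tree -> nat -> tree -> tree.

Fixpoint keys (t : tree) : list nat :=
  match t with
  | Leaf => []
  | Node l k r => keys l ++ k :: keys r
  end.

Fixpoint is_bst (t : tree) : Prop :=
  match t with
  | Leaf => True
  | Node l k r =>
      is_bst l /\ is_bst r /\
      Forall (fun x => (x < k)%nat) (keys l) /\
      Forall (fun x => (k < x)%nat) (keys r)
  end.

(* Zipper frames: [FL k r] = we are the left child of node k whose right
   subtree is r; [FR l k] = we are the right child of node k whose left
   subtree is l. *)
Inductive frame : Type :=
| FL : nat -> tree -> frame
| FR : tree -> nat -> frame.

(* Search for key v; returns the subtree rooted at v and the path of frames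
   from v's parent (head) up to the root (last). *)
Fixpoint find_path (v : nat) (t : tree) (acc : list frame)
  : option (tree * list frame) :=
  match t with
  | Leaf => None
  | Node l k r =>
      if Nat.eqb v k then Some (t, acc)
      else if Nat.ltb v k then find_path v l (FL k r :: acc)
      else find_path v r (FR l k :: acc)
  end.

(* Depth of key v in t (root has depth 0); 0 if v is absent (unused). *)
Definition depth (t : tree) (v : nat) : nat :=
  match find_path v t [] with
  | Some (_, p) => length p
  | None => 0%nat
  end.

Definition rotR (t : tree) : tree :=
  match t with
  | Node (Node a x b) y c => Node a x (Node b y c)
  | _ => t
  end.

Definition rotL (t : tree) : tree :=
  match t with
  | Node a y (Node b x c) => Node (Node a y b) x c
  | _ => t
  end.

Definition zig (f : frame) (t : tree) : tree :=
  match f with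
  | FL y c => rotR (Node t y c)
  | FR c y => rotL (Node c y t)
  end.

(* ZigZig / ZigZag: x is the root of [t], f1 gives its parent y and
   f2 its grandparent z.  Returns the new subtree replacing z's subtree. *)
Definition zig2 (f1 f2 : frame) (t : tree) : tree :=
  match f1, f2 with
  | FL y c, FL z d => rotR (rotR (Node (Node t y c) z d))
  | FR c y, FR d z => rotL (rotL (Node d z (Node c y t)))
  | FR c y, FL z d => rotR (Node (rotL (Node c y t)) z d)
  | FL y c, FR d z => rotL (Node d z (rotR (Node t y c)))
  end.

Fixpoint splay_path (t : tree) (p : list frame) : tree * nat :=
  match p with
  | [] => (t, 0%nat)
  | [f] => (zig f t, 1%nat)
  | f1 :: f2 :: p' =>
      let (r, c) := splay_path (zig2 f1 f2 t) p' in (r, (c + 2)%nat)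
  end.

Definition splay (v : nat) (S : tree) : tree * nat :=
  match find_path v S [] with
  | Some (t, p) => splay_path t p
  | None => (S, 0%nat)
  end.

Definition log2 (x : R) : R := ln x / ln 2.

Definition weight (T : tree) (u : nat) : R := (/ 4) ^ (depth T u).

Fixpoint sumw (w : nat -> R) (t : tree) : R :=
  match t with
  | Leaf => 0
  | Node l k r => sumw w l + w k + sumw w r
  end.

Fixpoint pot (w : nat -> R) (t : tree) : R :=
  match t with
  | Leaf => 0
  | Node l k r => log2 (sumw w t) + pot w l + pot w r
  end.

Definition Phi (T S : tree) : R := pot (weight T) S - pot (weight T) T.

Definition amortized_splay_cost (T S : tree) (v : nat) : R :=
  let (S', c) := splay v S in INR c + Phi T S' - Phi T S.

(* Main.v *)
Require Import Defs.
From Stdlib Require Import Reals List Lra Lia Arith Permutation.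
Import ListNotations.
Open Scope R_scope.

Lemma ln2_pos : 0 < ln 2.
Proof. rewrite <- ln_1. apply ln_increasing; lra. Qed.

Lemma log2_le a b : 0 < a -> a <= b -> log2 a <= log2 b.
Proof.
  intros Ha Hab. unfold log2, Rdiv. pose proof ln2_pos.
  apply Rmult_le_compat_r. left; apply Rinv_0_lt_compat; lra.
  destruct Hab as [H1|H1]. left; apply ln_increasing; lra. subst; lra.
Qed.

Lemma log2_amgm a b : 0 < a -> 0 < b -> log2 a + log2 b <= 2 * log2 (a + b) - 2.
Proof.
  intros Ha Hb. pose proof ln2_pos as L.
  assert (H : ln a + ln b + 2 * ln 2 <= 2 * ln (a + b)).
  { rewrite <- ln_mult by lra.
    replace (2 * ln 2) with (ln (2*2)) by (rewrite ln_mult; lra).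
    replace (2 * ln (a+b)) with (ln ((a+b)*(a+b))) by (rewrite ln_mult; lra).
    rewrite <- ln_mult by nra.
    assert (HH: a*b*(2*2) <= (a+b)*(a+b)) by (pose proof (pow2_ge_0 (a-b)); nra).
    destruct HH as [E|E]. left; apply ln_increasing. nra. exact E.
    rewrite E; lra. }
  unfold log2, Rdiv. set (i := / ln 2).
  assert (Hi : ln 2 * i = 1) by (unfold i; field; lra).
  assert (Hp : 0 < i) by (unfold i; apply Rinv_0_lt_compat; lra).
  pose proof (Rmult_le_compat_r i _ _ (Rlt_le _ _ Hp) H). nra.
Qed.

Lemma log2_2 : log2 2 = 1.
Proof. unfold log2. field. pose proof ln2_pos; lra. Qed.

Lemma log2_pow4 d : log2 ((/4) ^ d) = - 2 * INR d.
Proof.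
  unfold log2. rewrite ln_pow by lra. rewrite ln_Rinv by lra.
  replace 4 with (2*2) by lra. rewrite ln_mult by lra.
  field. pose proof ln2_pos; lra.
Qed.

Fixpoint plug (t : tree) (p : list frame) : tree :=
  match p with
  | [] => t
  | FL k r :: p' => plug (Node t k r) p'
  | FR l k :: p' => plug (Node l k t) p'
  end.

Lemma plug_app t p1 p2 : plug t (p1 ++ p2) = plug (plug t p1) p2.
Proof. revert t; induction p1 as [|f p1 IH]; intros t; simpl; auto. destruct f; apply IH. Qed.

Lemma find_path_plug v t acc s p :
  find_path v t acc = Some (s, p) -> plug s p = plug t acc /\ exists l r, s = Node l v r.
Proof.
  revert acc; induction t as [|l IHl k r IHr]; intros acc H; simpl in H; try discriminate.
  destruct (Nat.eqb v k) eqn:E1.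
  - inversion H; subst. apply Nat.eqb_eq in E1; subst. split; eauto.
  - destruct (Nat.ltb v k).
    + destruct (IHl _ H) as [H1 H2]. split; auto.
    + destruct (IHr _ H) as [H1 H2]. split; auto.
Qed.

Lemma find_path_acc v t acc :
  find_path v t acc = match find_path v t [] with
                      | Some (s, p) => Some (s, p ++ acc) | None => None end.
Proof.
  revert acc; induction t as [|l IHl k r IHr]; intros acc; simpl; auto.
  destruct (Nat.eqb v k); auto.
  destruct (Nat.ltb v k).
  - rewrite IHl, (IHl [FL k r]). destruct (find_path v l []) as [[s p]|]; auto.
    rewrite <- app_assoc; reflexivity.
  - rewrite IHr, (IHr [FR l k]). destruct (find_path v r []) as [[s p]|]; auto.
    rewrite <- app_assoc; reflexivity.
Qed.

Lemma find_path_exists v t acc :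
  is_bst t -> In v (keys t) -> exists s p, find_path v t acc = Some (s, p).
Proof.
  revert acc; induction t as [|l IHl k r IHr]; intros acc Hb Hin; simpl in *; [contradiction|].
  destruct Hb as (Hl & Hr & Fl & Fr).
  apply in_app_or in Hin. destruct Hin as [Hin|[Hin|Hin]].
  - rewrite Forall_forall in Fl. pose proof (Fl _ Hin).
    assert (Nat.eqb v k = false) as -> by (apply Nat.eqb_neq; lia).
    assert (Nat.ltb v k = true) as -> by (apply Nat.ltb_lt; lia). eauto.
  - subst. rewrite Nat.eqb_refl. eauto.
  - rewrite Forall_forall in Fr. pose proof (Fr _ Hin).
    assert (Nat.eqb v k = false) as -> by (apply Nat.eqb_neq; lia).
    assert (Nat.ltb v k = false) as -> by (apply Nat.ltb_ge; lia). eauto.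
Qed.

Lemma depth_left l k r u : is_bst (Node l k r) -> In u (keys l) ->
  depth (Node l k r) u = S (depth l u).
Proof.
  intros Hb Hin. pose proof Hb as (Hl & Hr & Fl & Fr).
  unfold depth; simpl.
  rewrite Forall_forall in Fl. pose proof (Fl _ Hin).
  assert (Nat.eqb u k = false) as -> by (apply Nat.eqb_neq; lia).
  assert (Nat.ltb u k = true) as -> by (apply Nat.ltb_lt; lia).
  rewrite find_path_acc.
  destruct (find_path_exists u l [] Hl Hin) as (s & p & E). rewrite E.
  rewrite length_app; simpl; lia.
Qed.

Lemma depth_right l k r u : is_bst (Node l k r) -> In u (keys r) ->
  depth (Node l k r) u = S (depth r u).
Proof.
  intros Hb Hin. pose proof Hb as (Hl & Hr & Fl & Fr).
  unfold depth; simpl.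
  rewrite Forall_forall in Fr. pose proof (Fr _ Hin).
  assert (Nat.eqb u k = false) as -> by (apply Nat.eqb_neq; lia).
  assert (Nat.ltb u k = false) as -> by (apply Nat.ltb_ge; lia).
  rewrite find_path_acc.
  destruct (find_path_exists u r [] Hr Hin) as (s & p & E). rewrite E.
  rewrite length_app; simpl; lia.
Qed.

Lemma sumw_ext w1 w2 t : (forall u, In u (keys t) -> w1 u = w2 u) -> sumw w1 t = sumw w2 t.
Proof.
  induction t as [|l IHl k r IHr]; intros H; simpl in *; auto.
  rewrite IHl, IHr, (H k); auto.
  - apply in_or_app; simpl; auto.
  - intros u Hu; apply H, in_or_app; simpl; auto.
  - intros u Hu; apply H, in_or_app; simpl; auto.
Qed.

Lemma sumw_scale c w t : sumw (fun u => c * w u) t = c * sumw w t.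
Proof. induction t; simpl; auto; try ring. rewrite IHt1, IHt2; ring. Qed.

Lemma sumw_nonneg w t : (forall u, 0 < w u) -> 0 <= sumw w t.
Proof. intros Hw; induction t; simpl; try lra. pose proof (Hw n); lra. Qed.

Lemma sumw_T_le2 t : is_bst t -> sumw (weight t) t <= 2.
Proof.
  induction t as [|l IHl k r IHr]; intros Hb; simpl; [lra|].
  pose proof Hb as (Hl & Hr & Fl & Fr).
  rewrite (sumw_ext (weight (Node l k r)) (fun u => /4 * weight l u) l).
  2:{ intros u Hu. unfold weight at 1. rewrite depth_left by auto. reflexivity. }
  rewrite (sumw_ext (weight (Node l k r)) (fun u => /4 * weight r u) r).
  2:{ intros u Hu. unfold weight at 1. rewrite depth_right by auto. reflexivity. }
  rewrite !sumw_scale.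
  assert (weight (Node l k r) k = 1) as ->.
  { unfold weight, depth; simpl. rewrite Nat.eqb_refl. simpl. reflexivity. }
  specialize (IHl Hl). specialize (IHr Hr). lra.
Qed.

Definition lsum (w : nat -> R) (l : list nat) := fold_right (fun k a => w k + a) 0 l.

Lemma lsum_app w l1 l2 : lsum w (l1 ++ l2) = lsum w l1 + lsum w l2.
Proof. induction l1; simpl; [ring|]. rewrite IHl1; ring. Qed.

Lemma sumw_lsum w t : sumw w t = lsum w (keys t).
Proof. induction t; simpl; auto. rewrite lsum_app, IHt1, IHt2; simpl; ring. Qed.

Lemma lsum_perm w l1 l2 : Permutation l1 l2 -> lsum w l1 = lsum w l2.
Proof. induction 1; simpl; try lra. Qed.

Lemma bst_nodup t : is_bst t -> NoDup (keys t).
Proof.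
  induction t as [|l IHl k r IHr]; intros Hb; simpl; [constructor|].
  destruct Hb as (Hl & Hr & Fl & Fr). rewrite Forall_forall in Fl, Fr.
  apply NoDup_app; auto.
  - constructor; auto. intros Hk; pose proof (Fr _ Hk); lia.
  - intros a Ha [E|E]; pose proof (Fl _ Ha); [lia|]. pose proof (Fr _ E); lia.
Qed.

Lemma plug_congr w p t1 t2 : sumw w t1 = sumw w t2 ->
  sumw w (plug t1 p) = sumw w (plug t2 p) /\
  pot w (plug t1 p) - pot w t1 = pot w (plug t2 p) - pot w t2.
Proof.
  revert t1 t2; induction p as [|f p IH]; intros t1 t2 H; simpl; [split; auto; lra|].
  destruct f as [k r | l k].
  - destruct (IH (Node t1 k r) (Node t2 k r)) as [H1 H2]; [simpl; rewrite H; auto|].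
    split; auto. simpl in H2. rewrite H in H2. lra.
  - destruct (IH (Node l k t1) (Node l k t2)) as [H1 H2]; [simpl; rewrite H; auto|].
    split; auto. simpl in H2. rewrite H in H2. lra.
Qed.

Ltac merge_logs := repeat match goal with
 | |- context [log2 ?X] => match goal with |- context [log2 ?Y] =>
     assert_fails (constr_eq X Y); replace (log2 Y) with (log2 X) by (f_equal; ring) end end.

Ltac finish := repeat match goal with H: context[log2 _] |- _ => revert H end;
  merge_logs; intros; lra.

Ltac lle X Y := pose proof (log2_le X Y ltac:(lra) ltac:(lra)).
Ltac amgm X Y := pose proof (log2_amgm X Y ltac:(lra) ltac:(lra)).

Lemma zig_step w f t : (forall u, 0 < w u) -> 0 < sumw w t ->
  1 + pot w (zig f t) - pot w (plug t [f]) <=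
  3 * (log2 (sumw w (plug t [f])) - log2 (sumw w t)) + 1.
Proof.
  intros Hw Ht. destruct t as [|a x b]; simpl in Ht; [lra|].
  destruct f as [y c | c y]; simpl.
  all: set (sa := sumw w a); set (sb := sumw w b); set (sc := sumw w c).
  all: assert (0 <= sa) by apply (sumw_nonneg w a Hw);
       assert (0 <= sb) by apply (sumw_nonneg w b Hw);
       assert (0 <= sc) by apply (sumw_nonneg w c Hw);
       pose proof (Hw x); pose proof (Hw y).
  - lle (sb + w y + sc) (sa + w x + sb + w y + sc).
    lle (sa + w x + sb) (sa + w x + sb + w y + sc). finish.
  - lle (sc + w y + sa) (sa + w x + sb + w y + sc).
    lle (sa + w x + sb) (sa + w x + sb + w y + sc). finish.
Qed.

Lemma zig2_sum w f1 f2 t : 0 < sumw w t -> sumw w (zig2 f1 f2 t) = sumw w (plug t [f1; f2]).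
Proof.
  intros Ht. destruct t as [|a x b]; simpl in Ht; [lra|].
  destruct f1, f2; simpl; ring.
Qed.

Lemma zig2_step w f1 f2 t : (forall u, 0 < w u) -> 0 < sumw w t ->
  2 + pot w (zig2 f1 f2 t) - pot w (plug t [f1; f2]) <=
  3 * (log2 (sumw w (plug t [f1; f2])) - log2 (sumw w t)).
Proof.
  intros Hw Ht. destruct t as [|a x b]; simpl in Ht; [lra|].
  destruct f1 as [y c | c y], f2 as [z d | d z]; simpl.
  all: set (sa := sumw w a); set (sb := sumw w b); set (sc := sumw w c); set (sd := sumw w d).
  all: assert (0 <= sa) by apply (sumw_nonneg w a Hw);
       assert (0 <= sb) by apply (sumw_nonneg w b Hw);
       assert (0 <= sc) by apply (sumw_nonneg w c Hw);
       assert (0 <= sd) by apply (sumw_nonneg w d Hw);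
       pose proof (Hw x); pose proof (Hw y); pose proof (Hw z).
  -
    lle (sb + w y + sc + w z + sd) (sa + w x + sb + w y + sc + w z + sd). lle (sa + w x + sb) (sa + w x + sb + w y + sc).
    amgm (sa + w x + sb) (sc + w z + sd). lle (sa + w x + sb + (sc + w z + sd)) (sa + w x + sb + w y + sc + w z + sd). finish.
  -
    amgm (sd + w z + sa) (sb + w y + sc). lle (sd + w z + sa + (sb + w y + sc)) (sa + w x + sb + w y + sc + w z + sd).
    lle (sa + w x + sb) (sa + w x + sb + w y + sc). lle (sa + w x + sb) (sa + w x + sb + w y + sc + w z + sd). finish.
  -
    amgm (sc + w y + sa) (sb + w z + sd). lle (sc + w y + sa + (sb + w z + sd)) (sa + w x + sb + w y + sc + w z + sd).
    lle (sa + w x + sb) (sa + w x + sb + w y + sc). lle (sa + w x + sb) (sa + w x + sb + w y + sc + w z + sd). finish.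
  -
    lle (sd + w z + sc + w y + sa) (sa + w x + sb + w y + sc + w z + sd). lle (sa + w x + sb) (sa + w x + sb + w y + sc).
    amgm (sd + w z + sc) (sa + w x + sb). lle (sd + w z + sc + (sa + w x + sb)) (sa + w x + sb + w y + sc + w z + sd). finish.
Qed.

Lemma splay_bound w (Hw : forall u, 0 < w u) n : forall p t r c, (length p <= n)%nat ->
  0 < sumw w t -> splay_path t p = (r, c) ->
  INR c + pot w r - pot w (plug t p) <=
  3 * (log2 (sumw w (plug t p)) - log2 (sumw w t)) + 1.
Proof.
  induction n as [|n IH]; intros p t r c Hl Ht Hs.
  - destruct p; simpl in Hl; [|lia]. simpl in Hs. inversion Hs; subst. simpl. lra.
  - destruct p as [|f1 [|f2 p']].
    + simpl in Hs. inversion Hs; subst. simpl. lra.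
    + simpl in Hs. inversion Hs; subst. simpl INR.
      pose proof (zig_step w f1 t Hw Ht). lra.
    + simpl in Hs. destruct (splay_path (zig2 f1 f2 t) p') as [r0 c0] eqn:E.
      inversion Hs; subst.
      pose proof (zig2_sum w f1 f2 t Ht) as Hsum.
      pose proof (zig2_step w f1 f2 t Hw Ht) as Hstep.
      assert (Hpos : 0 < sumw w (zig2 f1 f2 t)).
      { rewrite Hsum. simpl. destruct f1 as [k1 t1|t1 k1], f2 as [k2 t2|t2 k2]; simpl;
        pose proof (Hw k1); pose proof (Hw k2);
        pose proof (sumw_nonneg w t1 Hw); pose proof (sumw_nonneg w t2 Hw); lra. }
      simpl in Hl.
      specialize (IH p' (zig2 f1 f2 t) r c0 ltac:(lia) Hpos E).
      change (f1 :: f2 :: p') with ([f1; f2] ++ p'). rewrite plug_app.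
      destruct (plug_congr w p' (zig2 f1 f2 t) (plug t [f1; f2]) Hsum) as [H1 H2].
      rewrite plus_INR. simpl INR. rewrite <- H1. rewrite Hsum in IH. lra.
Qed.

Lemma plug_sum_ge w p t : (forall u, 0 < w u) -> sumw w t <= sumw w (plug t p).
Proof.
  intros Hw; revert t; induction p as [|f p IH]; intros t; simpl; [lra|].
  destruct f as [k r|l k]; eapply Rle_trans; [|apply IH| |apply IH]; simpl;
  pose proof (Hw k); [pose proof (sumw_nonneg w r Hw)|pose proof (sumw_nonneg w l Hw)]; lra.
Qed.

Theorem lemma4p4 (T S : tree) (v : nat) :
  is_bst T -> is_bst S ->
  (forall k : nat, In k (keys T) <-> In k (keys S)) ->
  In v (keys S) ->
  amortized_splay_cost T S v <= 4 + 6 * INR (depth T v).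
Proof.
  intros HT HS Hk Hv.
  assert (Hw : forall u, 0 < weight T u).
  { intros u; unfold weight. apply pow_lt. lra. }
  unfold amortized_splay_cost, splay, Phi.
  destruct (find_path_exists v S [] HS Hv) as (t & p & E). rewrite E.
  destruct (find_path_plug v S [] t p E) as [Hplug (l & r & Ht)].
  simpl in Hplug.
  destruct (splay_path t p) as [S' c] eqn:Es.
  assert (Hst : weight T v <= sumw (weight T) t).
  { subst t; simpl. pose proof (sumw_nonneg _ l Hw); pose proof (sumw_nonneg _ r Hw); lra. }
  assert (Htpos : 0 < sumw (weight T) t) by (pose proof (Hw v); lra).
  pose proof (splay_bound (weight T) Hw (length p) p t S' c (le_n _) Htpos Es) as B.
  rewrite Hplug in B.
  assert (HW : sumw (weight T) S = sumw (weight T) T).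
  { rewrite !sumw_lsum. apply lsum_perm. apply NoDup_Permutation; try apply bst_nodup; auto.
    intros x; rewrite Hk; tauto. }
  pose proof (sumw_T_le2 T HT) as H2.
  pose proof (plug_sum_ge (weight T) p t Hw) as HG. rewrite Hplug in HG.
  pose proof (log2_le (sumw (weight T) S) 2 ltac:(lra) ltac:(lra)) as L1.
  rewrite log2_2 in L1.
  pose proof (log2_le (weight T v) (sumw (weight T) t) (Hw v) Hst) as L2.
  unfold weight at 1 in L2. rewrite log2_pow4 in L2.
  lra.
Qed.
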